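(* Let $A$ be a set and $X$ an analytic measurable space. Let $S\subseteq\mathbf{Meas}(X,2)$ be an at most countable set of measurable maps such that the constant map $1$ is in $S$ and $k\wedge l\in S$ whenever $k,l\in S$. Then $S$ is approximating: for every measurable $h\colon X\to2$ such that ($k(y)=k(y')$ for all $k\in S$) implies $h(y)=h(y')$, every $a\in A$, $r\in\mathbb{Q}\cap[0,1]$ and all $u=(\mu_b)_{b\in A},v=(\nu_b)_{b\in A}\in(\mathcal{G}_{\le1}X)^A$: if for all $k\in S$, $a'\in A$, $r'\in\mathbb{Q}\cap[0,1]$ one has $\mu_{a'}(k^{-1}(1))>r'\iff\nu_{a'}(k^{-1}(1))>r'$, then $\mu_a(h^{-1}(1))>r\iff\nu_a(h^{-1}(1))>r$.
   Context: $2=\{0,1\}$ with the discrete $\sigma$-algebra; $\mathcal{G}_{\le1}X$ is the space of subprobability measures on $X$. A Polish space is a separable completely metrizable topological space; an analytic topological space is the image of a continuous map between Polish spaces; an analytic measurable space is $(X,\sigma(\mathcal{O}_X))$ for an analytic topological space $(X,\mathcal{O}_X)$. *)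

(* Defs.v *)
From HB Require Import structures.
From mathcomp Require Import all_boot all_order all_algebra.
From mathcomp Require Import all_classical all_reals all_analysis.
Set Implicit Arguments. Unset Strict Implicit. Unset Printing Implicit Defensive.
Import Order.TTheory GRing.Theory Num.Theory.
Local Open Scope classical_set_scope.
Local Open Scope ring_scope.

Definition polish (R : realType) (P : topologicalType) : Prop :=
  (exists D : set P, countable D /\ dense D) /\
  exists d : P -> P -> R,
    [/\ (forall x y, 0 <= d x y) /\
        (forall x y, d x y = 0 <-> x = y),
        (forall x y, d x y = d y x),
        (forall x y z, d x z <= d x y + d y z),
        (forall U : set P, open U <->
           (forall x, U x -> exists2 e : R, 0 < e & [set y | d x y < e] `<=` U)) &
        (forall u : nat -> P,
           (forall e : R, 0 < e -> exists N, forall m n, (N <= m)%N -> (N <= n)%N -> d (u m) (u n) < e) ->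
           exists l : P, forall e : R, 0 < e -> exists N, forall n, (N <= n)%N -> d (u n) l < e)].

(* An analytic topological space: (homeomorphic to) the image f(P) of a
   continuous map f : P -> Q between Polish spaces, with the subspace topology
   inherited from Q. *)
Definition analytic_top (R : realType) (T : topologicalType) : Prop :=
  exists (P Q : topologicalType) (f : P -> Q) (e : T -> Q),
    [/\ polish R P /\ polish R Q, continuous f, injective e,
        range e = range f &
        (forall U : set T, open U <-> exists2 V : set Q, open V & U = e @^-1` V)].

Definition borel_of (T : ptopologicalType) := g_sigma_algebraType (@open T).

Definition approximating (R : realType) (A : Type) (d : measure_display)
    (X : measurableType d) (S : set (X -> bool)) : Prop :=
  forall h : X -> bool, measurable_fun setT h ->
  (forall y y' : X, (forall k, S k -> k y = k y') -> h y = h y') ->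
  forall (a : A) (r : rat), 0 <= r <= 1 ->
  forall u v : A -> subprobability X R,
    (forall k a' (r' : rat), S k -> 0 <= r' <= 1 ->
       ((ratr r')%:E < u a' (k @^-1` [set true]) <->
        (ratr r')%:E < v a' (k @^-1` [set true]))%E) ->
    ((ratr r)%:E < u a (h @^-1` [set true]) <->
     (ratr r)%:E < v a (h @^-1` [set true]))%E.

(* Main.v *)
Require Import Defs.
From HB Require Import structures.
From mathcomp Require Import all_boot all_order all_algebra.
From mathcomp Require Import all_classical all_reals all_analysis.
Local Open Scope classical_set_scope.
From mathcomp Require Import ring lra.
Import Order.TTheory GRing.Theory Num.Theory.
Set Implicit Arguments. Unset Strict Implicit. Unset Printing Implicit Defensive.

Section Metric.
Local Open Scope classical_set_scope.
Local Open Scope ring_scope.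
Variables (R : realType) (X : topologicalType) (d : X -> X -> R).

Definition mtop := [/\ (forall x y, 0 <= d x y), (forall x y, d x y = 0 <-> x = y),
  (forall x y, d x y = d y x), (forall x y z, d x z <= d x y + d y z) &
  (forall U : set X, open U <->
     (forall x, U x -> exists2 e : R, 0 < e & [set y | d x y < e] `<=` U))].

Definition mclosed (A : set X) :=
  forall x, ~ A x -> exists2 r : R, 0 < r & forall y, d x y < r -> ~ A y.

Definition dcv (u : nat -> X) (l : X) :=
  forall e : R, 0 < e -> exists N, forall n, (N <= n)%N -> d (u n) l < e.

Hypothesis md : mtop.

Lemma d_ge0 x y : 0 <= d x y. Proof. by case: md. Qed.
Lemma d_sym x y : d x y = d y x. Proof. by case: md. Qed.
Lemma d_tri x y z : d x z <= d x y + d y z. Proof. by case: md. Qed.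
Lemma d_xx x : d x x = 0. Proof. by case: md => _ h _ _ _; apply/(proj2 (h x x)). Qed.
Lemma d_eq0 x y : d x y = 0 -> x = y. Proof. by case: md => _ h _ _ _; move/(h x y). Qed.
Lemma d_open (U : set X) : open U <->
     (forall x, U x -> exists2 e : R, 0 < e & [set y | d x y < e] `<=` U).
Proof. by case: md. Qed.

Lemma ball_open x r : open [set y | d x y < r].
Proof.
apply/d_open => y /= hy; exists (r - d x y); first by lra.
move=> z /= hz; have := d_tri x y z; lra.
Qed.

Lemma mclosed_open A : mclosed A -> open (~` A).
Proof.
move=> hA; apply/d_open => x /hA [r r0 hr]; exists r => // y /= /hr //.
Qed.

Lemma mclosed_lim A u l : mclosed A -> (exists N, forall n, (N <= n)%N -> A (u n)) ->
  dcv u l -> A l.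
Proof.
move=> hA [N hN] hu; apply/not_notP => nAl.
have [r r0 hr] := hA _ nAl.
have [M hM] := hu r r0.
apply: (hr (u (maxn N M))); first by rewrite d_sym; apply: hM; exact: leq_maxr.
by apply: hN; exact: leq_maxl.
Qed.

Lemma mclosedI A B : mclosed A -> mclosed B -> mclosed (A `&` B).
Proof.
move=> hA hB x /not_andP [/hA|/hB] [r r0 hr]; exists r => // y /hr h [] //.
Qed.

Lemma mclosedU A B : mclosed A -> mclosed B -> mclosed (A `|` B).
Proof.
move=> hA hB x /not_orP [/hA [r r0 hr] /hB [s s0 hs]].
exists (Order.min r s); first by rewrite lt_min r0 s0.
move=> y; rewrite lt_min => /andP [h1 h2] [/(hr _ h1)|/(hs _ h2)] //.
Qed.

Lemma mclosed_bigcap (F : nat -> set X) : (forall n, mclosed (F n)) ->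
  mclosed (\bigcap_n F n).
Proof.
move=> hF x nx.
have [n nFn] : exists n, ~ F n x.
  by apply/existsNP => h; apply: nx => n _; apply: h.
have [r r0 hr] := hF n x nFn; exists r => // y /hr h hy; apply: h; exact: hy.
Qed.

Lemma mclosed0 : mclosed set0.
Proof. by move=> x _; exists 1 => [|y _ []]; first exact: ltr01. Qed.

Lemma mclosedT : mclosed setT.
Proof. by move=> x []. Qed.

End Metric.

Section Metric2.
Local Open Scope classical_set_scope.
Local Open Scope ring_scope.
Variables (R : realType) (X : topologicalType) (d : X -> X -> R).
Lemma dcv_cont (Y : topologicalType) (dY : Y -> Y -> R) (phi : X -> Y) u l :
  mtop d -> mtop dY -> continuous phi -> dcv d u l -> dcv dY (phi \o u) (phi l).
Proof.
move=> md mY cphi hu e e0.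
have op : open (phi @^-1` [set y | dY (phi l) y < e]).
  by move/continuousP : cphi; apply; apply: ball_open.
have [r r0 hr] := (d_open md _).1 op l (eq_ind_r (fun z => z < e) e0 (d_xx mY (phi l))).
have [N hN] := hu r r0; exists N => n /hN h.
by rewrite (d_sym mY); apply: hr; rewrite /= (d_sym md).
Qed.

End Metric2.

Definition infinite (I : set nat) := forall N, exists j, (N <= j)%N /\ I j.

Lemma pigeon (A : nat -> set nat) m (I : set nat) : infinite I ->
  (forall j, I j -> exists2 i, (i <= m)%N & A i j) ->
  exists2 i, (i <= m)%N & infinite (fun j => I j /\ A i j).
Proof.
elim: m I => [|m IH] I infI cov.
  exists 0%N => // N; have [j [Nj Ij]] := infI N; exists j; split => //; split => //.
  by have [i] := cov j Ij; rewrite leqn0 => /eqP ->.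
have [inf1|ninf1] := pselect (infinite (fun j => I j /\ A m.+1 j)).
  by exists m.+1.
have [N0 hN0] : exists N0, forall j, (N0 <= j)%N -> ~ (I j /\ A m.+1 j).
  apply/not_notP => hn; apply: ninf1 => N.
  apply/not_notP => hj; apply: hn; exists N => j Nj hIA; apply: hj; exists j; split => //.
have H1 : infinite (fun j => I j /\ (N0 <= j)%N).
  move=> N; have [j [hj Ij]] := infI (maxn N N0); exists j; split.
    by apply: leq_trans hj; exact: leq_maxl.
  by split => //; apply: leq_trans hj; exact: leq_maxr.
have H2 : forall j, (fun j => I j /\ (N0 <= j)%N) j -> exists2 i, (i <= m)%N & A i j.
  move=> j [Ij N0j]; have [i im Aij] := cov j Ij.
  exists i => //; rewrite leq_eqVlt in im; case/orP: im => [/eqP ei|] //.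
  by exfalso; apply: (hN0 j N0j); rewrite -ei.
have [i im hi] := IH _ H1 H2.
exists i; first by apply: leq_trans im _.
by move=> N; have [j [Nj [[Ij _] Aj]]] := hi N; exists j.
Qed.

Section SeqComp.
Local Open Scope classical_set_scope.
Local Open Scope ring_scope.
Variables (R : realType) (X : topologicalType) (d : X -> X -> R).
Hypothesis md : mtop d.
Hypothesis complete : forall u : nat -> X,
  (forall e : R, 0 < e -> exists N, forall m n, (N <= m)%N -> (N <= n)%N -> d (u m) (u n) < e) ->
  exists l : X, forall e : R, 0 < e -> exists N, forall n, (N <= n)%N -> d (u n) l < e.
Variables (p : nat -> X) (W : nat -> set X) (m : nat -> nat).
Definition rr (n : nat) : R := (n.+1%:R)^-1.
Hypothesis Wcl : forall n, mclosed d (W n).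
Hypothesis Wdec : forall n x, W n.+1 x -> W n x.
Hypothesis Wcov : forall n x, W n.+1 x -> exists2 i, (i <= m n)%N & d (p i) x <= rr n.

Lemma rr_gt0 n : 0 < rr n.
Proof. by rewrite /rr invr_gt0 ltr0n. Qed.

Lemma rr_small (e : R) : 0 < e -> exists n, rr n < e.
Proof.
move=> e0; have he : 0 <= e^-1 by rewrite invr_ge0 ltW.
have := archi_boundP he.
set b := Num.Def.archi_bound _ => hb; exists b.
rewrite /rr -(invrK e) ltf_pV2 ?posrE ?ltr0n ?invr_gt0 //.
by apply: lt_le_trans hb _; rewrite ler_nat.
Qed.

Lemma Wmono n k x : (n <= k)%N -> W k x -> W n x.
Proof.
move=> /subnK <-; elim: (k - n)%N => [|j IH] //= hx.
by apply: IH; apply: Wdec.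
Qed.

Variable w : nat -> X.
Hypothesis hw : forall n j, (n <= j)%N -> W n (w j).

Let A n i := fun j => d (p i) (w j) <= rr n.

Let step_ex n (I : set nat) : infinite I ->
  exists i, (i <= m n)%N /\ infinite (fun j => (I j /\ (n < j)%N) /\ A n i j).
Proof.
move=> infI.
have H1 : infinite (fun j => I j /\ (n < j)%N).
  move=> N; have [j [hj Ij]] := infI (maxn N n.+1); exists j; split.
    by apply: leq_trans hj; exact: leq_maxl.
  by split => //; apply: leq_trans hj; exact: leq_maxr.
have H2 : forall j, (fun j => I j /\ (n < j)%N) j -> exists2 i, (i <= m n)%N & A n i j.
  by move=> j [Ij nj]; apply: Wcov; apply: hw.
have [i im hi] := @pigeon (A n) (m n) _ H1 H2.
by exists i.
Qed.

Let ci n (I : set nat) := xget 0%N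
  [set i | (i <= m n)%N /\ infinite (fun j => (I j /\ (n < j)%N) /\ A n i j)].

Fixpoint Iset n : set nat :=
  if n is n'.+1 then (fun j => (Iset n' j /\ (n' < j)%N) /\ A n' (ci n' (Iset n')) j)
  else setT.

Lemma Iset_inf n : infinite (Iset n).
Proof.
elim: n => [|n IH] /=; first by move=> N; exists N.
rewrite /ci; case: xgetP => [i -> [_ //]|hn].
by have [i hi] := step_ex n IH; exfalso; apply: (hn i).
Qed.

Lemma Iset_mono n k j : (n <= k)%N -> Iset k j -> Iset n j.
Proof.
move=> /subnK <-; elim: (k - n)%N => [|t IH] //= [[hj _] _].
by apply: IH.
Qed.

Fixpoint sig n : nat :=
  if n is n'.+1 then xget 0%N [set j | Iset n'.+1 j /\ (sig n' < j)%N] else 0%N.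

Lemma sig_prop n : Iset n (sig n) /\ (sig n < sig n.+1)%N.
Proof.
have key k : Iset k.+1 (sig k.+1) /\ (sig k < sig k.+1)%N.
  rewrite [sig k.+1]/=; case: xgetP => [j -> [] //|hn].
  have [j [hj Ij]] := Iset_inf k.+1 (sig k).+1.
  by exfalso; apply: (hn j).
case: n => [|n]; first by split => //; case: (key 0%N).
by split; [case: (key n)|case: (key n.+1)].
Qed.

Lemma sig_ge n : (n <= sig n)%N.
Proof.
elim: n => [//|n IH]; apply: leq_ltn_trans IH _; exact: (sig_prop n).2.
Qed.

Lemma seqcomp : exists sg : nat -> nat, (forall n, (sg n < sg n.+1)%N) /\
  exists2 l, (forall n, W n l) & dcv d (w \o sg) l.
Proof.
exists sig; split; first by move=> n; exact: (sig_prop n).2.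
have close n k : (n < k)%N -> d (p (ci n (Iset n))) (w (sig k)) <= rr n.
  move=> nk; have := (sig_prop k).1 => hk.
  by have := Iset_mono nk hk => /= [[_]].
have hC : forall e : R, 0 < e -> exists N, forall a b, (N <= a)%N -> (N <= b)%N ->
    d ((w \o sig) a) ((w \o sig) b) < e.
  move=> e e0; have e2 : 0 < e / 2 by lra.
  have [n hn] := rr_small e2.
  exists n.+1 => a b ha hb /=.
  have h1 := close n a ha; have h2 := close n b hb.
  have := d_tri md (w (sig a)) (p (ci n (Iset n))) (w (sig b)).
  have := d_sym md (w (sig a)) (p (ci n (Iset n))); lra.
have [l hl] := complete hC.
exists l; last exact: hl.
move=> n; apply: (mclosed_lim md (@Wcl n) _ hl).
exists n => k nk /=; apply: hw; apply: leq_trans nk (sig_ge k).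
Qed.

End SeqComp.

Local Open Scope classical_set_scope.
Local Open Scope ring_scope.

Lemma cvg0_ev (R : realType) (f : nat -> \bar R) (e : R) : f @ \oo --> 0%E -> (0 < e)%R ->
  exists N, forall n, (N <= n)%N -> (f n <= e%:E)%E.
Proof.
move=> /fine_cvgP [hfin hf] e0.
have h : \forall t \near \oo, (fine \o f) t < e by apply: (cvgr_lt 0 hf e e0); exact: eventually_filter.
have [N _ hN] := (near_andP _ _ _).2 (conj hfin h).
exists N => n /hN /= [fn fl].
by rewrite -(fineK fn) lee_fin ltW.
Qed.

Section Reg.
Local Open Scope classical_set_scope.
Local Open Scope ring_scope.
Variables (R : realType) (T : ptopologicalType) (dT : T -> T -> R).
Hypothesis mT : mtop dT.
Local Notation BT := (borel_of T).
Variable mu : {measure set BT -> \bar R}.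
Hypothesis mufin : (mu setT < +oo)%E.

Lemma open_meas (U : set T) : open U -> measurable (U : set BT).
Proof. move=> oU; exact: sub_sigma_algebra. Qed.

Lemma mclosed_meas (C : set T) : mclosed dT C -> measurable (C : set BT).
Proof.
move=> /(mclosed_open mT) /open_meas /measurableC; by rewrite setCK.
Qed.

Lemma mu_fin (A : set BT) : measurable A -> (mu A < +oo)%E.
Proof.
move=> mA; apply: le_lt_trans mufin; apply: le_measure; rewrite ?inE //.
Qed.

Definition creg (D : set T) := forall e : R, 0 < e -> exists C : set T,
  [/\ mclosed dT C, C `<=` D & (mu (D `\` C) <= e%:E)%E].

Lemma creg_open (U : set T) : open U -> creg U.
Proof.
move=> oU e e0.
pose C n := [set x | forall y, ~ U y -> rr R n <= dT x y].
have Ccl n : mclosed dT (C n).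
  move=> x /existsNP [y /not_implyP [nUy /negP]]; rewrite -ltNge => hy.
  exists (rr R n - dT x y); first by lra.
  move=> z hz hCz; have := hCz y nUy; have := d_tri mT z x y.
  rewrite (d_sym mT z x); lra.
pose F n := U `\` C n.
have mF n : measurable (F n : set BT).
  by apply: measurableD; [exact: open_meas|exact: mclosed_meas].
have capF : \bigcap_n F n = set0.
  apply/seteqP; split => // x hx; have [Ux _] := hx 0%N I.
  have [r r0 hr] := (d_open mT U).1 oU x Ux.
  have [n hn] := rr_small r0.
  have [_ /(_ _)] := hx n I; apply => y nUy; rewrite leNgt; apply/negP => hy.
  by apply: nUy; apply: hr => /=; lra.
have ninc : nonincreasing_seq F.
  apply/nonincreasing_seqP => n; apply/subsetPset => x [Ux nC]; split => // hC.
  apply: nC => y /hC; apply: le_trans; rewrite /rr lef_pV2 ?posrE ?ltr0n // ler_nat //.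
have cv := nonincreasing_cvg_mu (mu_fin (mF 0%N)) mF (bigcapT_measurable mF) ninc.
rewrite capF measure0 in cv.
have [N hN] := cvg0_ev cv e0.
exists (C N); split => //.
- by move=> x hx; apply/not_notP => nU; have := hx x nU; rewrite d_xx // leNgt rr_gt0.
- exact: hN.
Qed.

Lemma creg_openC (U : set T) : open U -> creg (~` U).
Proof.
move=> oU e e0; exists (~` U); split => //.
- move=> x nnU; have Ux : U x by apply/not_notP.
  have [r r0 hr] := (d_open mT U).1 oU x Ux.
  by exists r => // y /hr Uy; apply.
- by rewrite setDv measure0 lee_fin ltW.
Qed.

Lemma creg0 : creg set0.
Proof. by move=> e e0; exists set0; split => //; [exact: mclosed0|rewrite setDv measure0 lee_fin ltW]. Qed.

Lemma cregT : creg setT.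
Proof. by move=> e e0; exists setT; split => //; [exact: mclosedT|rewrite setDv measure0 lee_fin ltW]. Qed.

Lemma mclosed_bigcup_lt (F : nat -> set T) N : (forall n, mclosed dT (F n)) ->
  mclosed dT (\bigcup_(n in [set n | (n < N)%N]) F n).
Proof.
move=> hF; elim: N => [|N IH].
  by move=> x _; exists 1 => [|y _ [n /= //]]; exact: ltr01.
have -> : \bigcup_(n in [set n | (n < N.+1)%N]) F n =
    \bigcup_(n in [set n | (n < N)%N]) F n `|` F N.
  apply/seteqP; split => x.
    move=> [n /= nN Fx]; rewrite ltnS leq_eqVlt in nN; case/orP: nN => [/eqP en|nN].
      by right; rewrite -en.
    by left; exists n.
  by case => [[n /= nN Fx]|FN]; [exists n => //=; rewrite ltnS ltnW|exists N => //=].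
exact: mclosedU.
Qed.

Lemma creg_bigcupC (D : nat -> set T) : (forall n, measurable (D n : set BT)) ->
  (forall n, creg (~` D n)) -> creg (~` \bigcup_n D n).
Proof.
move=> mD hD e e0.
have hp n : 0 < e / (2 ^ n.+1)%:R by rewrite divr_gt0 // ltr0n expn_gt0.
have [C' hC'] := choice (fun n => hD n _ (hp n)).
exists (\bigcap_n C' n); split.
- by apply: mclosed_bigcap => n; case: (hC' n).
- move=> x hx [n _ Dx]; have [_ sub _] := hC' n; exact: (sub x (hx n I) Dx).
have mC n : measurable (C' n : set BT) by case: (hC' n) => /mclosed_meas.
have mE n : measurable ((~` D n `\` C' n) : set BT).
  by apply: measurableD => //; apply: measurableC.
apply: (@le_trans _ _ (mu (\bigcup_n (~` D n `\` C' n)))).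
  apply: le_measure; rewrite ?inE.
  - apply: measurableD; first by apply: measurableC; exact: bigcupT_measurable.
    exact: bigcapT_measurable.
  - exact: bigcupT_measurable.
  move=> x [nD nC]; have [n _ nCn] : exists2 n, setT n & ~ C' n x.
    by apply/not_notP => h; apply: nC => n _; apply/not_notP => h'; apply: h; exists n.
  by exists n => //; split => // Dn; apply: nD; exists n.
have hB := generalized_Boole_inequality mu mE (bigcupT_measurable _ mE).
apply: (le_trans hB).
apply: le_trans (epsilon_trick0 xpredT (ltW e0)).
by apply: lee_nneseries => [n _ _|n _]; [exact: measure_ge0|case: (hC' n)].
Qed.

Lemma creg_bigcup (D : nat -> set T) : (forall n, measurable (D n : set BT)) ->
  (forall n, creg (D n)) -> creg (\bigcup_n D n).
Proof.
move=> mD hD e e0.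
have e2 : 0 < e / 2 by lra.
have hp n : 0 < (e / 2) / (2 ^ n.+1)%:R by rewrite divr_gt0 // ltr0n expn_gt0.
have [C hC] := choice (fun n => hD n _ (hp n)).
pose Dn N := \bigcup_(n in [set n | (n < N)%N]) D n.
pose G N := \bigcup_n D n `\` Dn N.
have mDn N : measurable (Dn N : set BT) by apply: bigcup_measurable => k _.
have mU : measurable (\bigcup_n D n : set BT) by exact: bigcupT_measurable.
have mG N : measurable (G N : set BT) by apply: measurableD.
have capG : \bigcap_N G N = set0.
  apply/seteqP; split => // x hx; have [[n _ Dx] _] := hx 0%N I.
  by have [_ /(_ _)] := hx n.+1 I; apply; exists n => //=.
have ninc : nonincreasing_seq G.
  apply/nonincreasing_seqP => n; apply/subsetPset => x [Ux nC]; split => // hC'.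
  by apply: nC; case: hC' => k /= kn Dk; exists k => //=; apply: ltnW.
have cv := nonincreasing_cvg_mu (mu_fin (mG 0%N)) mG (bigcapT_measurable mG) ninc.
rewrite capG measure0 in cv.
have [N hN] := cvg0_ev cv e2.
have mC n : measurable (C n : set BT) by case: (hC n) => /mclosed_meas.
have mE n : measurable ((D n `\` C n) : set BT) by apply: measurableD.
exists (\bigcup_(n in [set n | (n < N)%N]) C n); split.
- by apply: mclosed_bigcup_lt => n; case: (hC n).
- by move=> x [n _ Cx]; exists n => //; case: (hC n) => _ /(_ x Cx).
have mCl : measurable ((\bigcup_(n in [set n | (n < N)%N]) C n) : set BT).
  by apply: bigcup_measurable => k _.
apply: (@le_trans _ _ (mu (G N `|` \bigcup_n (D n `\` C n)))).
  apply: le_measure; rewrite ?inE.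
  - exact: measurableD.
  - by apply: measurableU => //; exact: bigcupT_measurable.
  move=> x [Ux nCx]; have [hDn|hDn] := pselect (Dn N x); last by left.
  right; case: hDn => n /= nN Dx; exists n => //; split => // Cx.
  by apply: nCx; exists n.
apply: le_trans; first exact: (measureU2 mu (mG N) (bigcupT_measurable _ mE)).
have hB := generalized_Boole_inequality mu mE (bigcupT_measurable _ mE).
have hS : (\sum_(n <oo) mu (D n `\` C n) <= (e / 2)%:E)%E.
  apply: le_trans (epsilon_trick0 xpredT (ltW e2)).
  by apply: lee_nneseries => [n _ _|n _]; [exact: measure_ge0|case: (hC n)].
have -> : e = e / 2 + e / 2 by lra.
rewrite EFinD; apply: leeD; first exact: hN.
exact: le_trans hB hS.
Qed.

Lemma regular (D : set BT) : measurable D -> creg D /\ creg (~` D).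
Proof.
move=> mD.
pose M := [set A : set T | measurable (A : set BT) /\ creg A /\ creg (~` A)].
suff : <<s open >> `<=` M by move/(_ D mD) => [_ []].
apply: smallest_sub; last first.
  by move=> U oU; split; [exact: open_meas|split; [exact: creg_open|exact: creg_openC]].
split.
- by split => //; split; [exact: creg0|rewrite setC0; exact: cregT].
- move=> A [mA [h1 h2]]; rewrite setTD; split; first exact: measurableC.
  by split => //; rewrite setCK.
- move=> F hF; split; first by apply: bigcupT_measurable => n; case: (hF n).
  split.
    by apply: creg_bigcup => n; case: (hF n) => // _ [].
  by apply: creg_bigcupC => n; case: (hF n) => // _ [].
Qed.
End Reg.

Section Choquet.
Variables (R : realType) (T : ptopologicalType) (dT : T -> T -> R).
Variables (P : topologicalType) (dP : P -> P -> R).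
Hypothesis mT : mtop dT.
Hypothesis mP : mtop dP.
Hypothesis completeP : forall u : nat -> P,
  (forall e : R, 0 < e -> exists N, forall m n, (N <= m)%N -> (N <= n)%N -> dP (u m) (u n) < e) ->
  exists l : P, forall e : R, 0 < e -> exists N, forall n, (N <= n)%N -> dP (u n) l < e.
Variable phi : P -> T.
Hypothesis cphi : continuous phi.
Hypothesis sphi : forall y, exists p, phi p = y.
Variable pseq : nat -> P.
Hypothesis pdense : forall x (r : R), 0 < r -> exists i, dP (pseq i) x < r.
Local Notation BT := (borel_of T).
Variable mu : {measure set BT -> \bar R}.
Hypothesis mufin : (mu setT < +oo)%E.

Definition cball (p : P) (r : R) := [set x | dP p x <= r].

Lemma cball_cl p r : mclosed dP (cball p r).
Proof.
move=> x; rewrite /cball /= => /negP; rewrite -ltNge => hx.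
exists (dP p x - r); first by lra.
move=> y hy; rewrite /= => hpy; have := d_tri mP p y x; rewrite (d_sym mP y x); lra.
Qed.

Definition Uc (m : nat) (r : R) := [set x | exists2 i, (i <= m)%N & dP (pseq i) x <= r].

Lemma Uc_cl m r : mclosed dP (Uc m r).
Proof.
elim: m => [|m IH].
  have -> : Uc 0 r = cball (pseq 0) r.
    apply/seteqP; split => x /=; first by case => i; rewrite leqn0 => /eqP ->.
    by exists 0%N.
  exact: cball_cl.
have -> : Uc m.+1 r = Uc m r `|` cball (pseq m.+1) r.
  apply/seteqP; split => x /=.
    case => i; rewrite leq_eqVlt => /orP [/eqP ->|im] h; first by right.
    by left; exists i.
  by case => [[i im h]|h]; [exists i => //; apply: leq_trans im _|exists m.+1].
by apply: mclosedU => //; exact: cball_cl.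
Qed.

Lemma Uc_mono m r : Uc m r `<=` Uc m.+1 r.
Proof. by move=> x [i im h]; exists i => //; apply: leq_trans im _. Qed.

Lemma Uc_cover r : 0 < r -> \bigcup_m Uc m r = setT.
Proof.
move=> r0; apply/seteqP; split => // x _.
have [i hi] := pdense x r0; exists i => //; exists i => //; exact: ltW.
Qed.

Let M := fine (mu setT).
Let hM : mu setT = M%:E.
Proof. by rewrite fineK // ge0_fin_numE // measure_ge0. Qed.

Variable e : R.
Hypothesis e0 : 0 < e.
Let t := (M - e)%:E.

Definition Big (Z : set P) := forall D : set T, measurable (D : set BT) ->
  phi @` Z `<=` D -> (t < mu D)%E.

Lemma Big_mono (Z Z' : set P) : Z `<=` Z' -> Big Z -> Big Z'.
Proof.
move=> sub hZ D mD hD; apply: hZ => //; move=> y [p Zp <-]; apply: hD; exists p => //.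
exact: sub.
Qed.

Lemma BigT : Big setT.
Proof.
move=> D mD hD; have -> : D = (setT : set BT).
  by apply/seteqP; split => // y _; have [p <-] := sphi y; apply: hD; exists p.
by rewrite /t hM lte_fin; have := e0; lra.
Qed.


Lemma big_incr (Z : nat -> set P) : (forall m, Z m `<=` Z m.+1) ->
  Big (\bigcup_m Z m) -> exists m, Big (Z m).
Proof.
move=> incZ hB; apply/not_notP => hn.
have hD m : exists D : set T, [/\ measurable (D : set BT), phi @` Z m `<=` D & (mu D <= t)%E].
  apply/not_notP => h; apply: hn; exists m => D mD sD; rewrite ltNge; apply/negP => le.
  by apply: h; exists D.
have [Dm hDm] := choice hD.
have Zmono m j : (m <= j)%N -> Z m `<=` Z j.
  move=> /subnK <-; elim: (j - m)%N => [//|k IH] x /IH; rewrite addSn; exact: incZ.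
pose H m := \bigcap_(j in [set j | (m <= j)%N]) Dm j.
have mH m : measurable (H m : set BT).
  by apply: bigcap_measurable; [exists m => /= |move=> k _; case: (hDm k)].
have muH m : (mu (H m) <= t)%E.
  apply: le_trans (_ : mu (Dm m) <= t)%E; last by case: (hDm m).
  apply: le_measure; rewrite ?inE //; first by case: (hDm m).
  by move=> x hx; apply: hx => /=.
have ndH : nondecreasing_seq H.
  apply/nondecreasing_seqP => n; apply/subsetPset => x hx j /= nj.
  by apply: hx => /=; apply: ltnW.
have cv := @nondecreasing_cvg_mu _ _ _ mu H mH (bigcupT_measurable _ mH) ndH.
have : (t < mu (\bigcup_m H m))%E.
  apply: hB; first exact: bigcupT_measurable.
  move=> y [p [m _ Zp] <-]; exists m => // j /= mj.
  by case: (hDm j) => _ sub _; apply: sub; exists p => //; apply: Zmono mj _ Zp.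
rewrite ltNge => /negP; apply.
rewrite -(cvg_lim _ cv) //; apply: lime_le; first by apply/cvg_ex; eexists; exact: cv.
by apply: nearW => n /=.
Qed.

Definition mch (W : set P) (n : nat) :=
  xget 0%N [set m | Big (W `&` Uc m (rr R n))].

Fixpoint Wseq n : set P :=
  if n is n'.+1 then Wseq n' `&` Uc (mch (Wseq n') n') (rr R n') else setT.

Lemma Wseq_big n : Big (Wseq n).
Proof.
elim: n => [|n IH] /=; first exact: BigT.
rewrite /mch; case: xgetP => [m -> //|hn]; exfalso.
have [m hm] : exists m, Big (Wseq n `&` Uc m (rr R n)).
  apply: big_incr.
    by move=> m x [Wx Ux]; split => //; apply: Uc_mono.
  apply: Big_mono IH => x Wx.
  have [i hi] := pdense x (rr_gt0 R n); exists i => //; split => //.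
  by exists i => //; apply: ltW.
exact: (hn m).
Qed.

Lemma Wseq_cl n : mclosed dP (Wseq n).
Proof.
elim: n => [|n IH] /=; first exact: mclosedT.
apply: mclosedI => //; exact: Uc_cl.
Qed.

Lemma Wseq_dec n x : Wseq n.+1 x -> Wseq n x.
Proof. by case. Qed.

Lemma Wseq_cov n x : Wseq n.+1 x ->
  exists2 i, (i <= mch (Wseq n) n)%N & dP (pseq i) x <= rr R n.
Proof. by case => _ [i hi h]; exists i. Qed.

Definition clT (Z : set T) := [set y | forall r, 0 < r -> exists2 z, Z z & dT y z < r].

Lemma clT_cl Z : mclosed dT (clT Z).
Proof.
move=> x /existsNP [r /not_implyP [r0 /forall2NP hr]].
exists (r / 2); first by lra.
move=> y hy hcl; have r2 : 0 < r / 2 by lra.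
have [z Zz yz] := hcl _ r2.
case: (hr z) => // /negP; rewrite -leNgt => hxz.
have := d_tri mT x y z; lra.
Qed.

Lemma clT_sub Z : Z `<=` clT Z.
Proof. by move=> z Zz r r0; exists z => //; rewrite d_xx. Qed.

Definition Kset := \bigcap_n clT (phi @` Wseq n).

Lemma Kset_cl : mclosed dT Kset.
Proof. by apply: mclosed_bigcap => n; exact: clT_cl. Qed.

Lemma Kset_sub y : Kset y -> exists2 l, (forall n, Wseq n l) & phi l = y.
Proof.
move=> Ky.
have hw n : exists w, Wseq n w /\ dT y (phi w) < rr R n.
  have [_ [w Ww <-] h] := Ky n I _ (rr_gt0 R n); by exists w.
have [w hw'] := choice hw.
have hw2 n j : (n <= j)%N -> Wseq n (w j).
  by move=> nj; apply: (Wmono Wseq_dec nj); case: (hw' j).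
have [sg [sginc [l hl cv]]] := seqcomp mP completeP Wseq_cl Wseq_cov hw2.
exists l => //.
have cv2 := dcv_cont mP mT cphi cv.
apply: (d_eq0 mT); rewrite (d_sym mT); apply/eqP; rewrite eq_le (d_ge0 mT) andbT.
rewrite leNgt; apply/negP => a0; set a := dT y (phi l) in a0 *; have ea : a = dT y (phi l) by []; clearbody a.
have a2 : 0 < a / 2 by lra.
have [N1 hN1] := cv2 _ a2.
have [N2 hN2] := rr_small a2.
pose j := maxn N1 N2.
have sgj : (j <= sg j)%N.
  elim: j => [//|k IH]; apply: leq_ltn_trans IH _; exact: sginc.
have h1 := hN1 j (leq_maxl _ _).
have h2 : dT y (phi (w (sg j))) < rr R (sg j) by case: (hw' (sg j)).
have h3 : rr R (sg j) <= rr R N2.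
  rewrite /rr lef_pV2 ?posrE ?ltr0n // ler_nat ltnS.
  by apply: leq_trans sgj; exact: leq_maxr.
have := d_tri mT y (phi (w (sg j))) (phi l).
rewrite /= -ea in h1 *; lra.
Qed.

Lemma Kset_meas : measurable (Kset : set BT).
Proof. exact: (mclosed_meas mT Kset_cl). Qed.

Lemma Kset_big : (mu (~` Kset) <= e%:E)%E.
Proof.
pose Kn n := clT (phi @` Wseq n).
have mK n : measurable (Kn n : set BT) by apply: (mclosed_meas mT); exact: clT_cl.
have tK n : (t < mu (Kn n))%E by apply: Wseq_big => //; exact: clT_sub.
have ninc : nonincreasing_seq Kn.
  apply/nonincreasing_seqP => n; apply/subsetPset => y hy r r0.
  have [z [p Wp <-] yz] := hy r r0; exists (phi p) => //; exists p => //.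
  exact: Wseq_dec.
have cv := nonincreasing_cvg_mu (mu_fin mufin (mK 0%N)) mK (bigcapT_measurable mK) ninc.
have tKs : (t <= mu Kset)%E.
  rewrite -(cvg_lim _ cv) //; apply: lime_ge; first by apply/cvg_ex; eexists; exact: cv.
  by apply: nearW => n /=; apply: ltW.
have fK : mu Kset \is a fin_num.
  by rewrite ge0_fin_numE ?measure_ge0 // (mu_fin mufin Kset_meas).
have muC (A : set BT) : measurable A -> mu (~` A) = (mu setT - mu A)%E.
  by move=> mA; rewrite -setTD measureD // setTI.
rewrite (muC _ Kset_meas) hM.
rewrite /t -(fineK fK) lee_fin in tKs.
by rewrite -(fineK fK) -EFinB lee_fin; lra.
Qed.

Definition seqcompact (K : set T) := forall c : nat -> T, (forall n, K (c n)) ->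
  exists sg : nat -> nat, (forall n, (sg n < sg n.+1)%N) /\
  exists2 l, K l & dcv dT (c \o sg) l.

Lemma Kset_seqcompact : seqcompact Kset.
Proof.
move=> c hc.
have hl n : exists l, (forall k, Wseq k l) /\ phi l = c n.
  by have [l h1 h2] := Kset_sub (hc n); exists l.
have [l hl'] := choice hl.
have hw2 n j : (n <= j)%N -> Wseq n (l j) by move=> _; case: (hl' j).
have [sg [sginc [x hx cv]]] := seqcomp mP completeP Wseq_cl Wseq_cov hw2.
exists sg; split => //; exists (phi x).
  by move=> n _; apply: clT_sub; exists x.
have cv2 := dcv_cont mP mT cphi cv.
move=> r r0; have [N hN] := cv2 r r0; exists N => n /hN /=.
by case: (hl' (sg n)) => _ ->.
Qed.
End Choquet.

Lemma compactK (R : realType) (T : ptopologicalType) (dT : T -> T -> R)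
  (P : topologicalType) (dP : P -> P -> R) :
  mtop dT -> mtop dP ->
  (forall u : nat -> P,
  (forall e : R, 0 < e -> exists N, forall m n, (N <= m)%N -> (N <= n)%N -> dP (u m) (u n) < e) ->
  exists l : P, forall e : R, 0 < e -> exists N, forall n, (N <= n)%N -> dP (u n) l < e) ->
  forall phi : P -> T, continuous phi -> (forall y, exists p, phi p = y) ->
  forall pseq : nat -> P, (forall x (r : R), 0 < r -> exists i, dP (pseq i) x < r) ->
  forall mu : {measure set (borel_of T) -> \bar R}, (mu setT < +oo)%E ->
  forall e : R, 0 < e -> exists K : set T,
    [/\ mclosed dT K, seqcompact dT K & (mu (~` K) <= e%:E)%E].
Proof.
move=> mT mP cP phi cphi sphi pseq pd mu mufin e e0.
exists (Kset dT dP phi pseq mu e); split.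
- exact: Kset_cl.
- exact: (Kset_seqcompact mT mP cP cphi).
- exact: (Kset_big mT sphi pd mufin e0).
Qed.

Section Key.
Variables (R : realType) (T : ptopologicalType) (dT : T -> T -> R).
Hypothesis mT : mtop dT.
Local Notation BT := (borel_of T).
Variable mu : {measure set BT -> \bar R}.
Hypothesis mufin : (mu setT < +oo)%E.
Hypothesis hK : forall e : R, 0 < e -> exists K : set T,
    [/\ mclosed dT K, seqcompact dT K & (mu (~` K) <= e%:E)%E].
Variable G : set (set T).
Variable k : nat -> T -> bool.
Hypothesis hG : forall n, G (k n @^-1` [set true]).
Local Notation GT := (g_sigma_algebraType G).

Definition Ex N (C : set T) :=
  [set x | exists2 c, C c & forall n, (n < N)%N -> k n x = k n c].

Lemma Ex_meas N (C : set T) : measurable (Ex N C : set GT).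
Proof.
elim: N C => [|N IH] C.
  have [[c Cc]|nC] := pselect (exists c, C c).
    have -> : Ex 0 C = setT by apply/seteqP; split => // x _; exists c.
    exact: measurableT.
  have -> : Ex 0 C = set0.
    by apply/seteqP; split => // x [c Cc _]; apply: nC; exists c.
  exact: measurable0.
pose D := k N @^-1` [set true].
have mD : measurable (D : set GT) by apply: sub_sigma_algebra; exact: hG.
have -> : Ex N.+1 C = (D `&` Ex N (C `&` D)) `|` (~` D `&` Ex N (C `&` ~` D)).
  apply/seteqP; split => x.
    move=> [c Cc hc]; have hN := hc N (ltnSn N).
    have hc' : forall n, (n < N)%N -> k n x = k n c by move=> n nN; apply: hc; apply: ltnW.
    case Dx : (k N x).
      left; split; first by rewrite /D /= Dx.
      by exists c => //; split => //; rewrite /D /= -hN Dx.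
    right; split; first by rewrite /D /= Dx.
    by exists c => //; split => //; rewrite /D /= -hN Dx.
  case => [[Dx [c [Cc Dc] hc]]|[nDx [c [Cc nDc] hc]]]; exists c => // n.
    rewrite ltnS leq_eqVlt => /orP [/eqP ->|nN]; last exact: hc.
    by move: Dx Dc; rewrite /D /= => -> ->.
  rewrite ltnS leq_eqVlt => /orP [/eqP ->|nN]; last exact: hc.
  move: nDx nDc; rewrite /D /=; case: (k N x); case: (k N c) => //.
apply: measurableU; apply: measurableI => //; exact: measurableC.
Qed.

Hypothesis hGm : G `<=` (measurable : set (set BT)).

Lemma not_in_eventually (A : set T) u l : mclosed dT A -> ~ A l -> dcv dT u l ->
  exists J, forall j, (J <= j)%N -> ~ A (u j).
Proof.
move=> hA nAl cv; have [r r0 hr] := hA l nAl; have [J hJ] := cv r r0.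
by exists J => j /hJ h; apply: hr; rewrite (d_sym mT).
Qed.

Lemma key (B : set T) : measurable (B : set BT) ->
  (forall x y, (forall n, k n x = k n y) -> B x -> B y) ->
  forall e : R, 0 < e -> exists E : set T,
    [/\ <<s G >> E, E `<=` B & (mu B <= mu E + e%:E)%E].
Proof.
move=> mB sat e e0.
have e3 : 0 < e / 3 by lra.
have [K [Kcl Kc Kmu]] := hK e3.
have [CB [CBcl CBB CBmu]] := (regular mT mufin mB).1 _ e3.
pose D n := k n @^-1` [set true].
have mD n : measurable (D n : set BT) by apply: hGm; exact: hG.
have hp n : 0 < (e / 3 / 2) / (2 ^ n.+1)%:R by rewrite divr_gt0 // ?ltr0n ?expn_gt0 //; lra.
have hC n : exists CC : set T * set T, [/\ mclosed dT CC.1, CC.1 `<=` D n,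
     mclosed dT CC.2, CC.2 `<=` ~` D n &
     (mu ((D n `\` CC.1) `|` (~` D n `\` CC.2)) <= (e / 3 / (2 ^ n.+1)%:R)%:E)%E].
  have [r1 r2] := regular mT mufin (mD n).
  have [C1 [h1 h2 h3]] := r1 _ (hp n).
  have [C0 [h4 h5 h6]] := r2 _ (hp n).
  exists (C1, C0); split => //=.
  have mC1 := mclosed_meas mT h1; have mC0 := mclosed_meas mT h4.
  apply: le_trans; first apply: measureU2.
  - exact: measurableD.
  - by apply: measurableD => //; exact: measurableC.
  have -> : e / 3 / (2 ^ n.+1)%:R = e / 3 / 2 / (2 ^ n.+1)%:R + e / 3 / 2 / (2 ^ n.+1)%:R.
    by field; rewrite pnatr_eq0 expn_eq0.
  by rewrite EFinD; apply: leeD.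
have [CC hCC] := choice hC.
pose C1 n := (CC n).1. pose C0 n := (CC n).2.
pose C := K `&` CB `&` \bigcap_n (C1 n `|` C0 n).
have Ccl : mclosed dT C.
  apply: mclosedI; first exact: mclosedI.
  by apply: mclosed_bigcap => n; case: (hCC n) => h1 _ h2 _ _; exact: mclosedU.
pose E := \bigcap_N Ex N C.
exists E; split.
- apply: (bigcapT_measurable (T := GT)) => N; exact: Ex_meas.
- move=> x Ex.
  have hc N : exists c, C c /\ forall n, (n < N)%N -> k n x = k n c.
    by have [c Cc hc] := Ex N I; exists c.
  have [c hc'] := choice hc.
  have [sg [sginc [l Kl cv]]] := Kc c (fun N => (hc' N).1.1.1).
  have Cl : C l.
    apply: (mclosed_lim mT Ccl _ cv); exists 0%N => j _; exact: (hc' _).1.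
  have sgj j : (j <= sg j)%N.
    by elim: j => [//|j IH]; apply: leq_ltn_trans IH _; exact: sginc.
  apply: (sat l x) => [n|]; last by case: Cl => [[_ /CBB]].
  have [h1 h2 h3 h4 _] := hCC n.
  case: Cl => _ /(_ n I) [l1|l0].
    have nl0 : ~ C0 n l by move=> /h4; apply; exact: h2.
    have [J hJ] := not_in_eventually h3 nl0 cv.
    pose j := maxn J n.+1.
    have hcj := (hc' (sg j)).1; case: hcj => _ /(_ n I) [c1|c0]; last first.
      by exfalso; apply: (hJ j (leq_maxl _ _)).
    have nj : (n < sg j)%N by apply: leq_trans (sgj j); exact: leq_maxr.
    rewrite ((hc' (sg j)).2 n nj).
    by rewrite (h2 _ l1) (h2 _ c1).
  have nl1 : ~ C1 n l by move=> /h2 hD; exact: (h4 _ l0 hD).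
  have [J hJ] := not_in_eventually h1 nl1 cv.
  pose j := maxn J n.+1.
  have hcj := (hc' (sg j)).1; case: hcj => _ /(_ n I) [c1|c0].
    by exfalso; apply: (hJ j (leq_maxl _ _)).
  have nj : (n < sg j)%N by apply: leq_trans (sgj j); exact: leq_maxr.
  rewrite ((hc' (sg j)).2 n nj).
  have : ~ D n l := h4 _ l0; have : ~ D n (c (sg j)) := h4 _ c0.
  by rewrite /D /=; case: (k n l); case: (k n (c (sg j))).
have sGm : <<s G >> `<=` (measurable : set (set BT)).
  exact: smallest_sub (sigma_algebra_measurable BT) hGm.
have mE : measurable (E : set BT).
  apply: sGm; apply: (bigcapT_measurable (T := GT)) => N; exact: Ex_meas.
have mC : measurable (C : set BT) by exact (mclosed_meas mT Ccl).
have CE : C `<=` E by move=> x Cx N _; exists x.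
have CBsub : C `<=` B by move=> x [[_ /CBB]].
have mN n : measurable ((D n `\` C1 n) `|` (~` D n `\` C0 n) : set BT).
  have [h1 _ h3 _ _] := hCC n.
  apply: measurableU; apply: measurableD => //; last exact (mclosed_meas mT h3).
    exact (mclosed_meas mT h1).
  exact: measurableC.
have mK : measurable (K : set BT) by exact (mclosed_meas mT Kcl).
have mCB : measurable (CB : set BT) by exact (mclosed_meas mT CBcl).
have hBC : (mu (B `\` C) <= e%:E)%E.
  apply: (@le_trans _ _ (mu (~` K `|` ((B `\` CB) `|` \bigcup_n ((D n `\` C1 n) `|` (~` D n `\` C0 n)))))).
    apply: le_measure; rewrite ?inE.
    - exact: measurableD.
    - apply: measurableU; first exact: measurableC.
      by apply: measurableU; [exact: measurableD|exact: bigcupT_measurable].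
    move=> x [Bx nCx]; have [Kx|nKx] := pselect (K x); last by left.
    right; have [CBx|nCBx] := pselect (CB x); last by left.
    right; have [n _ hn] : exists2 n, setT n & ~ (C1 n `|` C0 n) x.
      apply/not_notP => h; apply: nCx; split => // n _; apply/not_notP => h'.
      by apply: h; exists n.
    exists n => //; case Dx : (k n x).
      by left; split => // h1; apply: hn; left.
    by right; split => [|h0]; [rewrite /D /= Dx|apply: hn; right].
  apply: le_trans; first apply: measureU2.
  - exact: measurableC.
  - by apply: measurableU; [exact: measurableD|exact: bigcupT_measurable].
  apply: le_trans; first (apply: leeD; [exact: Kmu|apply: measureU2]).
  - exact: measurableD.
  - exact: bigcupT_measurable.
  have hB := generalized_Boole_inequality mu mN (bigcupT_measurable _ mN).
  have hS : (\sum_(n <oo) mu ((D n `\` C1 n) `|` (~` D n `\` C0 n)) <= (e / 3)%:E)%E.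
    apply: le_trans (epsilon_trick0 xpredT (ltW e3)).
    by apply: lee_nneseries => [n _ _|n _]; [exact: measure_ge0|case: (hCC n)].
  rewrite [X in (_ <= X%:E)%E](_ : e = e / 3 + (e / 3 + e / 3)); last by field.
  rewrite !EFinD; apply: leeD => //; apply: leeD => //.
  exact: le_trans hB hS.
rewrite (measureDI mu mB mC) (setIidr CBsub) addeC.
apply: leeD => //; apply: le_measure => //; rewrite inE //.
Qed.

End Key.

Lemma enum_countable (U : Type) (A : set U) (a0 : U) : A a0 -> countable A ->
  exists s : nat -> U, (forall n, A (s n)) /\ (forall a, A a -> exists n, s n = a).
Proof.
move=> Aa0 /countable_injP [g ginj].
pose s n := match pselect (exists x, A x /\ g x = n) with
  | left h => proj1_sig (cid h) | right _ => a0 end.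
exists s; split.
  move=> n; rewrite /s; case: pselect => // h.
  by case: (proj2_sig (cid h)).
move=> a Aa; exists (g a); rewrite /s; case: pselect => [h|]; last first.
  by move=> h; exfalso; apply: h; exists a.
case: (proj2_sig (cid h)) => h1 h2.
by apply: ginj; rewrite ?inE.
Qed.

Lemma rat_eq (R : realType) (x y : \bar R) : (0 <= x)%E -> (x <= 1)%E ->
  (0 <= y)%E -> (y <= 1)%E ->
  (forall r : rat, 0 <= r <= 1 -> ((ratr r)%:E < x <-> (ratr r)%:E < y)%E) -> x = y.
Proof.
move=> x0 x1 y0 y1 h.
have fx : x \is a fin_num by rewrite ge0_fin_numE // (le_lt_trans x1) // ltey.
have fy : y \is a fin_num by rewrite ge0_fin_numE // (le_lt_trans y1) // ltey.
move: x0 x1 y0 y1 h; rewrite -(fineK fx) -(fineK fy).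
move: (fine x) (fine y) => a b; rewrite !lee_fin => a0 a1 b0 b1 h.
have gen : forall a b : R, 0 <= a -> b <= 1 -> a < b ->
    (forall r : rat, 0 <= r <= 1 -> ((ratr r)%:E < a%:E <-> (ratr r)%:E < b%:E)%E) -> False.
  move=> c d c0 d1 cd hh; have [q] := rat_in_itvoo cd.
  rewrite in_itv /= => /andP [hq1 hq2].
  have q0 : 0 <= q by rewrite -(ler_rat R) rmorph0; lra.
  have q1 : q <= 1 by rewrite -(ler_rat R) rmorph1; lra.
  have := (hh q (introT andP (conj q0 q1))).2; rewrite !lte_fin => hq'.
  have := hq' hq2; lra.
congr (_%:E); apply/eqP; rewrite eq_le; apply/andP; split; rewrite leNgt; apply/negP => lt.
  by apply: (gen b a) => // r hr; split => [/(h r hr).2|/(h r hr).1].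
exact: (gen a b).
Qed.

Lemma mtop_embed (R : realType) (T Q : topologicalType) (dQ : Q -> Q -> R) (e : T -> Q) :
  mtop dQ -> injective e ->
  (forall U : set T, open U <-> exists2 V : set Q, open V & U = e @^-1` V) ->
  mtop (fun x y => dQ (e x) (e y)).
Proof.
move=> mQ inje opT; split.
- by move=> x y; exact: d_ge0.
- by move=> x y; split => [/(d_eq0 mQ)/inje //|->]; exact: d_xx.
- by move=> x y; exact: d_sym.
- by move=> x y z; exact: d_tri.
move=> U; split.
  move=> /opT [V oV ->] x /= Vx.
  have [r r0 hr] := (d_open mQ V).1 oV _ Vx.
  by exists r => // y /= hy; apply: hr.
move=> hU; apply/opT.
exists [set q | exists x, U x /\ exists2 r, 0 < r /\ [set y | dQ (e x) (e y) < r] `<=` U & dQ (e x) q < r].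
  apply/(d_open mQ) => q [x [Ux [r [r0 sub] hq]]].
  exists (r - dQ (e x) q); first by lra.
  move=> q' /= hq'; exists x; split => //; exists r => //.
  have := d_tri mQ (e x) q q'; lra.
apply/seteqP; split => y /=.
  move=> Uy; have [r r0 hr] := hU y Uy; exists y; split => //; exists r => //.
  by rewrite d_xx.
by move=> [x [Ux [r [r0 sub] hq]]]; apply: sub.
Qed.

Unset Implicit Arguments.

Theorem mainTheorem9 (R : realType) (A : Type) (T : ptopologicalType)
  (hT : analytic_top R T) (S : set (borel_of T -> bool)) :
  countable S ->
  (forall k, S k -> measurable_fun setT k) ->
  S (fun _ => true) ->
  (forall k l, S k -> S l -> S (fun x => k x && l x)) ->
  approximating R A S.
Proof.
move=> cS Sm S1 SI.
case: hT => P [Q [f [e [[polP polQ] cf inje rng opT]]]].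
case: polP => [[DP [cDP dDP]] [dP [[dP0 dPeq] dPsym dPtri dPop dPcomp]]].
case: polQ => [_ [dQ [[dQ0 dQeq] dQsym dQtri dQop _]]].
have mP : mtop dP by split.
have mQ : mtop dQ by split.
have mT := mtop_embed mQ inje opT.
have hx p : exists x, e x = f p.
  have : range e (f p) by rewrite rng; exists p.
  by case => x _ ex; exists x.
pose phi p := proj1_sig (cid (hx p)).
have ephi p : e (phi p) = f p := proj2_sig (cid (hx p)).
have cphi : continuous phi.
  apply/continuousP => U oU; have [V oV ->] := (opT U).1 oU.
  have -> : phi @^-1` (e @^-1` V) = f @^-1` V by apply/seteqP; split => p /=; rewrite ephi.
  by move/continuousP : cf; apply.
have sphi y : exists p, phi p = y.
  have : range f (e y) by rewrite -rng; exists y.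
  by case => p _ fp; exists p; apply: inje; rewrite ephi.
have [kseq [kS Sk]] := enum_countable S1 cS.
move=> h hm hsat a r r01 u v huv.
pose B := h @^-1` [set true].
have mB : measurable (B : set (borel_of T)).
  by have := hm measurableT [set true] I; rewrite setTI.
pose G := [set k @^-1` [set true] | k in S].
have hGm : G `<=` (measurable : set (set (borel_of T))).
  by move=> _ [k Sk' <-]; have := Sm k Sk' measurableT [set true] I; rewrite setTI.
have hG n : G (kseq n @^-1` [set true]) by exists (kseq n).
have sat x y : (forall n, kseq n x = kseq n y) -> B x -> B y.
  move=> hk; rewrite /B /= => hx'; rewrite -(hsat x y) // => k' Sk'.
  by have [n <-] := Sk k' Sk'; exact: hk.
have fin (m : subprobability (borel_of T) R) : (m setT < +oo)%E.
  by apply: le_lt_trans (@sprobability_setT _ _ _ m) _; rewrite ltry.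
have sGm : <<s G >> `<=` (measurable : set (set (borel_of T))).
  exact: smallest_sub (sigma_algebra_measurable _) hGm.
have dir (m1 m2 : subprobability (borel_of T) R) :
    (forall E, <<s G >> E -> m1 E = m2 E) -> (m1 B <= m2 B)%E.
  move=> h12; apply/lee_addgt0Pr => eps eps0.
  have [[p0 _]|nP] := pselect (exists p : P, True); last first.
    have -> : B = set0.
      by apply/seteqP; split => // y _; have [p _] := sphi y; apply: nP; exists p.
    by rewrite !measure0 add0e lee_fin ltW.
  have [d0 Dd0] : DP !=set0.
    have [z [_ Dz]] := dDP setT (ex_intro _ p0 I) openT; by exists z.
  have [pseq [pD Dp]] := enum_countable Dd0 cDP.
  have pdense : forall x (r : R), 0 < r -> exists i, dP (pseq i) x < r.
    move=> x r0 r0p.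
    have [z [hz Dz]] := dDP [set y | dP x y < r0] (ex_intro _ x (eq_ind_r (fun t => t < r0) r0p (d_xx mP x))) (ball_open mP x r0).
    by have [n pn] := Dp z Dz; exists n; rewrite pn (d_sym mP).
  have hK := compactK mT mP dPcomp cphi sphi pdense (fin m1).
  have [E [sE EB hE]] := key mT (fin m1) hK hG hGm mB sat eps0.
  have h' : (m1 E <= m2 B)%E.
    by rewrite (h12 E sE); apply: le_measure; rewrite ?inE //; apply: sGm.
  by apply: le_trans hE _; apply: leeD => //; exact: h'.
have agree (m1 m2 : subprobability (borel_of T) R) :
    (forall k (r' : rat), S k -> 0 <= r' <= 1 ->
       ((ratr r')%:E < m1 (k @^-1` [set true]) <->
        (ratr r')%:E < m2 (k @^-1` [set true]))%E) ->
    forall E, <<s G >> E -> m1 E = m2 E.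
  move=> hm12.
  apply: (g_sigma_algebra_measure_unique G hGm (fun _ => setT)).
  - by move=> _; exists (fun _ => true) => //; apply/seteqP.
  - by apply/seteqP; split => // x _; exists 0%N.
  - move=> _ _ [k1 S1' <-] [k2 S2' <-]; exists (fun x => k1 x && k2 x); first exact: SI.
    by apply/seteqP; split => x /=; [move/andP|case => -> ->].
  - move=> _ [k Sk' <-]; apply: rat_eq.
    + exact: measure_ge0.
    + apply: (le_trans _ (@sprobability_setT _ _ _ m1)); apply: le_measure; rewrite ?inE //.
      by apply: hGm; exists k.
    + exact: measure_ge0.
    + apply: (le_trans _ (@sprobability_setT _ _ _ m2)); apply: le_measure; rewrite ?inE //.
      by apply: hGm; exists k.
    + by move=> r' hr'; exact (hm12 k r' Sk' hr').
  - by move=> _; exact: fin.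
have ag := agree (u a) (v a) (fun k r' Sk hr => huv k a r' Sk hr).
have ag' := agree (v a) (u a) (fun k r' Sk hr => iff_sym (huv k a r' Sk hr)).
have eqB : u a B = v a B.
  by apply/eqP; rewrite eq_le; apply/andP; split; [exact: dir ag|exact: dir ag'].
by rewrite /B in eqB; rewrite eqB.
Qed.
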